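(* In the setting of the context (with assumptions (A.1)–(A.3)), suppose the PMM generates infinite sequences $\{(u_k,v_k)\}$, $\{(z_k,w_k)\}$, $\{\gamma_k\}$, $\{\rho_k\}$, and define $x_k=z_{k-1}+\lambda w_{k-1}+\lambda(Cv_k-d)$ and $y_k=x_k-\lambda(w_{k-1}-Mu_k)$. Let $d_0$ be the distance from $(z_0,w_0)$ to the set $S_e(\partial h_1,\partial h_2)$ and $\tau=\min\{\lambda,1/\lambda\}$. Then for all $k=1,2,\dots$, $$0\in\partial g(v_k)+C^*x_k,\qquad 0\in\partial f(u_k)+M^*y_k,$$ and there exists an index $1\le i\le k$ such that $$\|Mu_i+Cv_i-d\|\le\frac{2d_0}{(1-\bar\rho)\tau\sqrt k},\qquad \|x_i-y_i\|\le\frac{2d_0}{(1-\bar\rho)\tau\sqrt k}.$$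
   Context: Let $f:\mathbb{R}^{m_1}\to(-\infty,\infty]$, $g:\mathbb{R}^{m_2}\to(-\infty,\infty]$ be proper closed convex, $M:\mathbb{R}^{m_1}\to\mathbb{R}^n$, $C:\mathbb{R}^{m_2}\to\mathbb{R}^n$ linear, $d\in\mathbb{R}^n$; consider $\min\{f(u)+g(v):Mu+Cv=d\}$ with Lagrangian $L(u,v,z)=f(u)+g(v)+\langle Mu+Cv-d,z\rangle$. A saddle point is $(u^*,v^*,z^* )$ with $L(u^*,v^*,z^* )$ finite and $\min_{(u,v)}L(u,v,z^* )=L(u^*,v^*,z^* )=\max_zL(u^*,v^*,z)$. Let $h_1(z)=f^*(-M^*z)$, $h_2(z)=g^*(-C^*z)+\langle d,z\rangle$ ($^*$ on functions = Fenchel conjugate, on operators = adjoint), and $S_e(\partial h_1,\partial h_2)=\{(z,w)\in\mathbb{R}^n\times\mathbb{R}^n:-w\in\partial h_1(z),\ w\in\partial h_2(z)\}$ (a closed convex set). Standing assumptions: (A.1) $L$ has a saddle point; (A.2) $\mathrm{ri}(\mathrm{dom} f^* )\cap\mathrm{range}(M^* )\ne\emptyset$; (A.3) $\mathrm{ri}(\mathrm{dom} g^* )\cap\mathrm{range}(C^* )\ne\emptyset$. PMM: given $(z_0,w_0)\in\mathbb{R}^n\times\mathbb{R}^n$, $\lambda>0$, $\bar\rho\in[0,1)$, for $k=1,2,\dots$: (1) let $v_k$ be a minimizer of $g(v)+\langle z_{k-1}+\lambda w_{k-1},Cv-d\rangle+\frac\lambda2\|Cv-d\|^2$ and $u_k$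 a minimizer of $f(u)+\langle z_{k-1}+\lambda(Cv_k-d),Mu\rangle+\frac\lambda2\|Mu\|^2$; (2) if $\|Mu_k+Cv_k-d\|+\|Mu_k-w_{k-1}\|=0$ stop; otherwise set $\gamma_k=\dfrac{\lambda\|Cv_k-d+w_{k-1}\|^2+\lambda\langle d-Cv_k-Mu_k,w_{k-1}-Mu_k\rangle}{\|Mu_k+Cv_k-d\|^2+\lambda^2\|Mu_k-w_{k-1}\|^2}$; (3) choose $\rho_k\in[1-\bar\rho,1+\bar\rho]$ and set $z_k=z_{k-1}+\rho_k\gamma_k(Mu_k+Cv_k-d)$, $w_k=w_{k-1}-\rho_k\gamma_k\lambda(w_{k-1}-Mu_k)$. *)

(* Defs.v *)
(* R : realType, vectors of R^n are column vectors 'cV[R]_n,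
   linear maps R^m -> R^n are matrices 'M[R]_(n,m) acting by *m, the adjoint
   is the transpose, extended-real valued functions take values in \bar R. *)
From HB Require Import structures.
From mathcomp Require Import all_boot all_order all_algebra.
From mathcomp Require Import boolp classical_sets reals constructive_ereal ereal.
Set Implicit Arguments. Unset Strict Implicit. Unset Printing Implicit Defensive.
Import Order.TTheory GRing.Theory Num.Theory.
Local Open Scope classical_set_scope.
Local Open Scope ring_scope.

Section ConvexAnalysis.
Variable R : realType.

Definition dotv {n : nat} (x y : 'cV[R]_n) : R := \sum_(i < n) x i 0 * y i 0.
Definition normv {n : nat} (x : 'cV[R]_n) : R := Num.sqrt (dotv x x).

Definition cvg_seqv {n : nat} (xs : nat -> 'cV[R]_n) (x : 'cV[R]_n) : Prop :=
  forall eps : R, 0 < eps -> exists N : nat, forall k, (N <= k)%N -> normv (xs k - x) < eps.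

Definition proper_fun {n : nat} (f : 'cV[R]_n -> \bar R) : Prop :=
  (forall x, f x != -oo%E) /\ (exists x, (f x < +oo)%E).

(* convex (extended-valued; for proper functions this is convexity of the epigraph) *)
Definition convex_fun {n : nat} (f : 'cV[R]_n -> \bar R) : Prop :=
  forall (x y : 'cV[R]_n) (t : R), 0 < t < 1 ->
    (f (t *: x + (1 - t) *: y)%R <= t%:E * f x + (1 - t)%:E * f y)%E.

(* closed = lower semicontinuous = all sublevel sets are closed *)
Definition closed_fun {n : nat} (f : 'cV[R]_n -> \bar R) : Prop :=
  forall (a : R) (xs : nat -> 'cV[R]_n) (x : 'cV[R]_n),
    (forall k, (f (xs k) <= a%:E)%E) -> cvg_seqv xs x -> (f x <= a%:E)%E.

Definition conj_fun {n : nat} (f : 'cV[R]_n -> \bar R) (y : 'cV[R]_n) : \bar R :=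
  ereal_sup [set ((dotv x y)%:E - f x)%E | x in [set: 'cV[R]_n]].

Definition dom_fun {n : nat} (f : 'cV[R]_n -> \bar R) : set 'cV[R]_n :=
  [set x | (f x < +oo)%E].

Definition subdiff {n : nat} (f : 'cV[R]_n -> \bar R) (x : 'cV[R]_n) : set 'cV[R]_n :=
  [set s | f x \is a fin_num /\
           forall y, (f x + (dotv s (y - x)%R)%:E <= f y)%E].

Definition aff_hull {n : nat} (A : set 'cV[R]_n) : set 'cV[R]_n :=
  [set x | exists (p : nat) (P : 'I_p -> 'cV[R]_n) (c : 'I_p -> R),
     (forall i, A (P i)) /\ \sum_(i < p) c i = 1 /\ x = \sum_(i < p) c i *: P i].

Definition rel_int {n : nat} (A : set 'cV[R]_n) : set 'cV[R]_n :=
  [set x | A x /\ exists eps : R, 0 < eps /\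
     forall y, aff_hull A y -> normv (y - x) < eps -> A y].

Definition range_mx {m n : nat} (A : 'M[R]_(m, n)) : set 'cV[R]_m :=
  [set y | exists x : 'cV[R]_n, y = A *m x].

Definition lagr {m1 m2 n : nat} (f : 'cV[R]_m1 -> \bar R) (g : 'cV[R]_m2 -> \bar R)
  (M : 'M[R]_(n, m1)) (C : 'M[R]_(n, m2)) (d : 'cV[R]_n)
  (u : 'cV[R]_m1) (v : 'cV[R]_m2) (z : 'cV[R]_n) : \bar R :=
  (f u + g v + (dotv (M *m u + C *m v - d)%R z)%:E)%E.

Definition saddle_point {m1 m2 n : nat} (f : 'cV[R]_m1 -> \bar R) (g : 'cV[R]_m2 -> \bar R)
  (M : 'M[R]_(n, m1)) (C : 'M[R]_(n, m2)) (d : 'cV[R]_n)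
  (us : 'cV[R]_m1) (vs : 'cV[R]_m2) (zs : 'cV[R]_n) : Prop :=
  lagr f g M C d us vs zs \is a fin_num /\
  (forall u v, (lagr f g M C d us vs zs <= lagr f g M C d u v zs)%E) /\
  (forall z, (lagr f g M C d us vs z <= lagr f g M C d us vs zs)%E).

Definition h1 {m1 n : nat} (f : 'cV[R]_m1 -> \bar R) (M : 'M[R]_(n, m1))
  (z : 'cV[R]_n) : \bar R := conj_fun f (- (M^T *m z)).
Definition h2 {m2 n : nat} (g : 'cV[R]_m2 -> \bar R) (C : 'M[R]_(n, m2)) (d : 'cV[R]_n)
  (z : 'cV[R]_n) : \bar R := (conj_fun g (- (C^T *m z)) + (dotv d z)%:E)%E.

Definition Se {m1 m2 n : nat} (f : 'cV[R]_m1 -> \bar R) (g : 'cV[R]_m2 -> \bar R)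
  (M : 'M[R]_(n, m1)) (C : 'M[R]_(n, m2)) (d : 'cV[R]_n) : set ('cV[R]_n * 'cV[R]_n) :=
  [set zw | subdiff (h1 f M) zw.1 (- zw.2) /\ subdiff (h2 g C d) zw.1 zw.2].

Definition dist_pair {n : nat} (z0 w0 : 'cV[R]_n) (S : set ('cV[R]_n * 'cV[R]_n)) : R :=
  inf [set Num.sqrt (normv (z0 - zw.1) ^+ 2 + normv (w0 - zw.2) ^+ 2) | zw in S].

(* PMM iteration (with the stopping test never triggered: infinite sequences) *)
Definition PMM_run {m1 m2 n : nat} (f : 'cV[R]_m1 -> \bar R) (g : 'cV[R]_m2 -> \bar R)
  (M : 'M[R]_(n, m1)) (C : 'M[R]_(n, m2)) (d : 'cV[R]_n) (lam rhobar : R)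
  (u : nat -> 'cV[R]_m1) (v : nat -> 'cV[R]_m2) (z w : nat -> 'cV[R]_n)
  (gam rho : nat -> R) : Prop :=
  forall k : nat, (1 <= k)%N ->
    (forall v' : 'cV[R]_m2,
       (g (v k) + (dotv (z k.-1 + lam *: w k.-1)%R (C *m v k - d)%R)%:E
          + (lam / 2 * normv (C *m v k - d) ^+ 2)%R%:E
        <= g v' + (dotv (z k.-1 + lam *: w k.-1)%R (C *m v' - d)%R)%:E
          + (lam / 2 * normv (C *m v' - d) ^+ 2)%R%:E)%E) /\
    (forall u' : 'cV[R]_m1,
       (f (u k) + (dotv (z k.-1 + lam *: (C *m v k - d))%R (M *m u k))%:E
          + (lam / 2 * normv (M *m u k) ^+ 2)%R%:E
        <= f u' + (dotv (z k.-1 + lam *: (C *m v k - d))%R (M *m u'))%:E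
          + (lam / 2 * normv (M *m u') ^+ 2)%R%:E)%E) /\
    normv (M *m u k + C *m v k - d) + normv (M *m u k - w k.-1) != 0 /\
    gam k = (lam * normv (C *m v k - d + w k.-1) ^+ 2
             + lam * dotv (d - C *m v k - M *m u k) (w k.-1 - M *m u k))
            / (normv (M *m u k + C *m v k - d) ^+ 2
               + lam ^+ 2 * normv (M *m u k - w k.-1) ^+ 2) /\
    1 - rhobar <= rho k <= 1 + rhobar /\
    z k = z k.-1 + (rho k * gam k) *: (M *m u k + C *m v k - d) /\
    w k = w k.-1 - (rho k * gam k * lam) *: (w k.-1 - M *m u k).

End ConvexAnalysis.

(* Main.v *)
Require Import Defs.
From HB Require Import structures.
From mathcomp Require Import all_boot all_order all_algebra.
From mathcomp Require Import boolp classical_sets reals constructive_ereal ereal.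
From mathcomp Require Import lra ring zify.
Import Order.TTheory GRing.Theory Num.Theory.
Local Open Scope classical_set_scope.
Local Open Scope ring_scope.

Section Aux.
Variable R : realType.
Implicit Types (a b t : R).

Lemma dotvC {n} (x y : 'cV[R]_n) : dotv x y = dotv y x.
Proof. by rewrite /dotv; apply: eq_bigr => i _; rewrite mulrC. Qed.
Lemma dotvDl {n} (x y z : 'cV[R]_n) : dotv (x + y) z = dotv x z + dotv y z.
Proof. by rewrite /dotv -big_split; apply: eq_bigr => i _; rewrite !mxE mulrDl. Qed.
Lemma dotvDr {n} (x y z : 'cV[R]_n) : dotv z (x + y) = dotv z x + dotv z y.
Proof. by rewrite dotvC dotvDl !(dotvC z). Qed.
Lemma dotvZl {n} a (x z : 'cV[R]_n) : dotv (a *: x) z = a * dotv x z.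
Proof. by rewrite /dotv mulr_sumr; apply: eq_bigr => i _; rewrite !mxE mulrA. Qed.
Lemma dotvZr {n} a (x z : 'cV[R]_n) : dotv z (a *: x) = a * dotv z x.
Proof. by rewrite dotvC dotvZl dotvC. Qed.
Lemma dotvNl {n} (x z : 'cV[R]_n) : dotv (- x) z = - dotv x z.
Proof. by rewrite -scaleN1r dotvZl mulN1r. Qed.
Lemma dotvNr {n} (x z : 'cV[R]_n) : dotv z (- x) = - dotv z x.
Proof. by rewrite dotvC dotvNl dotvC. Qed.
Lemma dotv_ge0 {n} (x : 'cV[R]_n) : 0 <= dotv x x.
Proof. by apply: sumr_ge0 => i _; rewrite -expr2 sqr_ge0. Qed.
Lemma normv2 {n} (x : 'cV[R]_n) : normv x ^+ 2 = dotv x x.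
Proof. by rewrite /normv sqr_sqrtr // dotv_ge0. Qed.
Lemma normv_ge0 {n} (x : 'cV[R]_n) : 0 <= normv x.
Proof. exact: sqrtr_ge0. Qed.
Lemma dotv_mulmx {n} m (A : 'M[R]_(n, m)) x y : dotv (A *m x) y = dotv x (A^T *m y).
Proof.
rewrite /dotv; under eq_bigr do rewrite !mxE big_distrl /=.
rewrite exchange_big /=; apply: eq_bigr => j _; rewrite !mxE big_distrr /=.
by apply: eq_bigr => i _; rewrite !mxE; ring.
Qed.
Lemma dotv_mulmxr {n} m (A : 'M[R]_(n, m)) x y : dotv y (A *m x) = dotv (A^T *m y) x.
Proof. by rewrite dotvC dotv_mulmx dotvC. Qed.
Lemma dotv_eq0 {n} (x : 'cV[R]_n) : dotv x x = 0 -> x = 0.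
Proof.
move=> h; apply/matrixP => i j; rewrite (ord1 j) mxE.
have h0 : forall i : 'I_n, true -> 0 <= x i 0 * x i 0 by move=> *; rewrite -expr2 sqr_ge0.
have := psumr_eq0P h0 h (i:=i) isT.
by move/eqP; rewrite mulf_eq0 orbb => /eqP.
Qed.

Lemma lim_t (X K : R) : (forall t, 0 < t < 1 -> X <= t * K) -> X <= 0.
Proof.
move=> h; rewrite leNgt; apply/negP => X0.
have K0 : 0 < K.
  have H2 : 0 < (2^-1 : R) < 1 by apply/andP; split; lra.
  have := h _ H2; lra.
have s0 : 0 < X + K by lra.
have ts : X / (X + K) * (X + K) = X by rewrite divfK // gt_eqF.
have t0 : 0 < X / (X + K) by rewrite divr_gt0.
have t1 : X / (X + K) < 1 by rewrite ltr_pdivrMr // mul1r; lra.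
have := h _ (introT andP (conj t0 t1)) .
move: ts t0; set t := X / (X + K) => ts t0 ht; nra.
Qed.

Lemma min_subdiff {m} (F : 'cV[R]_m -> \bar R) (q : 'cV[R]_m -> R) (u gr : 'cV[R]_m) :
  proper_fun F -> convex_fun F ->
  (forall u', (F u + (q u)%:E <= F u' + (q u')%:E)%E) ->
  (forall u', exists K, forall t, 0 < t < 1 ->
     q (t *: u' + (1 - t) *: u) - q u <= t * dotv gr (u' - u) + t ^+ 2 * K) ->
  subdiff F u (- gr).
Proof.
move=> [Fninf [u0 Fu0]] Fcvx Hmin Hq.
have [a Fua] : exists a, F u = a%:E.
  move: (Hmin u0) (Fninf u) Fu0; case: (F u) => [a _ _ _| | ]; first by exists a.
  - by case: (F u0).
  - by [].
split=> [|y]; rewrite Fua //.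
case Fy: (F y) => [b||]; last (by have := Fninf y; rewrite Fy); last by rewrite leey.
rewrite -EFinD lee_fin.
have [K HK] := Hq y.
suff: a - dotv gr (y - u) - b <= 0 by rewrite dotvNl; lra.
apply: (@lim_t _ K) => t /andP[t0 t1].
have Hc := Fcvx y u t ltac:(by apply/andP).
rewrite Fy Fua -!EFinM -EFinD in Hc.
have Hm := Hmin (t *: y + (1 - t) *: u). rewrite Fua in Hm.
have Hk := HK t ltac:(by apply/andP).
move: Hc Hm; case: (F (t *: y + (1 - t) *: u)) => [c||].
- rewrite lee_fin -!EFinD lee_fin => Hc Hm.
  have : t * (a - dotv gr (y - u) - b - t * K) <= 0 by rewrite expr2 in Hk; lra.
  by rewrite pmulr_rle0 //; lra.
- by [].
- by have := Fninf (t *: y + (1 - t) *: u) => /eqP.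
Qed.

Lemma finE {x : \bar R} : x \is a fin_num -> exists r, x = r%:E.
Proof. by move=> h; exists (fine x); rewrite fineK. Qed.

Ltac dexp := rewrite ?(dotvDl, dotvDr, dotvNl, dotvNr, dotvZl, dotvZr).

Lemma conj_ge {m} {F : 'cV[R]_m -> \bar R} {u s : 'cV[R]_m} {a} :
  F u = a%:E -> ((dotv u s - a)%:E <= conj_fun F s)%E.
Proof. by move=> Fu; apply: ereal_sup_ubound; exists u => //; rewrite Fu EFinB. Qed.

Lemma conj_eq {m} {F : 'cV[R]_m -> \bar R} {u s : 'cV[R]_m} {a} :
  F u = a%:E -> subdiff F u s -> conj_fun F s = (dotv u s - a)%:E.
Proof.
move=> Fu [_ hs]; apply/le_anti/andP; split; last exact: conj_ge.
apply: ge_ereal_sup => _ [x _ <-].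
have := hs x; rewrite Fu; case: (F x) => [b||] //.
rewrite -EFinD -EFinB !lee_fin; rewrite (dotvC s); dexp; rewrite (dotvC u s); lra.
by move=> _; rewrite /= leNye.
Qed.

Lemma chain1 {m n} (F : 'cV[R]_m -> \bar R) (A : 'M[R]_(n, m)) u z :
  subdiff F u (- (A^T *m z)) -> subdiff (h1 F A) z (- (A *m u)).
Proof.
move=> hs; have [a Fu] := finE hs.1.
rewrite /subdiff /h1 /= (conj_eq Fu hs); split => // z'.
apply: le_trans (conj_ge Fu).
rewrite -EFinD lee_fin; dexp; rewrite -!dotv_mulmx; lra.
Qed.

Lemma chain2 {m n} (F : 'cV[R]_m -> \bar R) (A : 'M[R]_(n, m)) (e : 'cV[R]_n) u z :
  subdiff F u (- (A^T *m z)) -> subdiff (h2 F A e) z (e - A *m u).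
Proof.
move=> hs; have [a Fu] := finE hs.1.
rewrite /subdiff /h2 /= (conj_eq Fu hs); split => // z'.
apply: le_trans (leeD2r _ (conj_ge Fu)).
rewrite -!EFinD lee_fin; dexp; rewrite -!dotv_mulmx; lra.
Qed.

Lemma subdiff_mono {n} (h : 'cV[R]_n -> \bar R) (a b s t : 'cV[R]_n) :
  subdiff h a s -> subdiff h b t -> 0 <= dotv (s - t) (a - b).
Proof.
move=> [ha hs] [hb ht]; have [ra Ha] := finE ha; have [rb Hb] := finE hb.
have := hs b; have := ht a; rewrite Ha Hb -!EFinD !lee_fin.
dexp; lra.
Qed.

Lemma quad_q {n m} (A : 'M[R]_(n,m)) (c e : 'cV[R]_n) lam (v v' : 'cV[R]_m) t :
  let q := fun v => dotv c (A *m v + e) + lam / 2 * normv (A *m v + e) ^+ 2 in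
  q (t *: v' + (1 - t) *: v) - q v
  = t * dotv (A^T *m (c + lam *: (A *m v + e))) (v' - v)
    + t ^+ 2 * (lam / 2 * dotv (A *m (v' - v)) (A *m (v' - v))).
Proof.
have E : A *m (t *: v' + (1 - t) *: v) + e = (A *m v + e) + t *: (A *m (v' - v)).
  by rewrite mulmxDr mulmxBr -!scalemxAr; apply/matrixP=> i j; rewrite !mxE; ring.
rewrite /= E !normv2 dotv_mulmx trmxK.
move: (A *m v + e) (A *m (v' - v)) => r d.
dexp; rewrite (dotvC d r); by field.
Qed.

Lemma fejer {n} (z w P U zs ws x y : 'cV[R]_n) lam rho gam rb tau :
  0 < lam -> 0 <= rb < 1 -> 1 - rb <= rho <= 1 + rb ->
  0 < tau -> tau <= lam -> tau <= lam^-1 ->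
  x = z + lam *: w + lam *: P ->
  y = x - lam *: (w - U) ->
  0 <= dotv (- P - ws) (x - zs) ->
  0 <= dotv (- U - - ws) (y - zs) ->
  0 < normv (U + P) ^+ 2 + lam ^+ 2 * normv (U - w) ^+ 2 ->
  gam * (normv (U + P) ^+ 2 + lam ^+ 2 * normv (U - w) ^+ 2)
    = lam * normv (P + w) ^+ 2 + lam * dotv (- P - U) (w - U) ->
  normv (z + (rho * gam) *: (U + P) - zs) ^+ 2
    + normv (w - (rho * gam * lam) *: (w - U) - ws) ^+ 2
    + (1 - rb ^+ 2) * (tau ^+ 2 / 4) * (normv (U + P) ^+ 2 + normv (x - y) ^+ 2)
  <= normv (z - zs) ^+ 2 + normv (w - ws) ^+ 2.
Proof.
move=> l0 /andP[rb0 rb1] /andP[r1 r2] t0 tl tl' hx hy m1 m2 D0p hg.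
have Exy : normv (x - y) ^+ 2 = lam ^+ 2 * normv (U - w) ^+ 2.
  rewrite hy hx !normv2; dexp; rewrite (dotvC U w); ring.
rewrite Exy.
move: m1 m2 D0p hg.
set D0 := normv (U + P) ^+ 2 + lam ^+ 2 * normv (U - w) ^+ 2.
set Phi := lam * normv (P + w) ^+ 2 + lam * dotv (- P - U) (w - U).
set S1 := dotv (- P - ws) (x - zs).
set S2 := dotv (- U - - ws) (y - zs).
move=> m1 m2 D0p hg.
have E2 : normv (z + (rho * gam) *: (U + P) - zs) ^+ 2
    + normv (w - (rho * gam * lam) *: (w - U) - ws) ^+ 2
    = normv (z - zs) ^+ 2 + normv (w - ws) ^+ 2
      - 2 * rho * gam * (Phi + S1 + S2) + (rho * gam) ^+ 2 * D0.
  rewrite /Phi /S1 /S2 /D0 hy hx !normv2; dexp.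
  rewrite ?(dotvC w z) ?(dotvC P z) ?(dotvC U z) ?(dotvC zs z) ?(dotvC ws z).
  rewrite ?(dotvC P w) ?(dotvC U w) ?(dotvC zs w) ?(dotvC ws w).
  rewrite ?(dotvC U P) ?(dotvC zs P) ?(dotvC ws P).
  rewrite ?(dotvC zs U) ?(dotvC ws U) ?(dotvC ws zs).
  ring.
have Ea : 0 <= normv (P + w) ^+ 2 by rewrite sqr_ge0.
have Ee : 0 <= normv (w - U) ^+ 2 by rewrite sqr_ge0.
have EQ : 0 <= normv (U + P) ^+ 2 by rewrite sqr_ge0.
have EUw : normv (U - w) ^+ 2 = normv (w - U) ^+ 2.
  by rewrite !normv2; dexp; rewrite (dotvC U w); ring.
have EPhi : Phi = lam * (normv (P + w) ^+ 2 - dotv (P + w) (w - U) + normv (w - U) ^+ 2).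
  by rewrite /Phi !normv2; dexp; rewrite ?(dotvC U w) ?(dotvC U P) ?(dotvC w P); ring.
have EQ' : normv (U + P) ^+ 2 = normv (P + w) ^+ 2 - 2 * dotv (P + w) (w - U) + normv (w - U) ^+ 2.
  by rewrite !normv2; dexp; rewrite ?(dotvC U w) ?(dotvC U P) ?(dotvC w P); ring.
rewrite /D0 EUw in hg D0p E2 *; clear D0.
move: EPhi EQ' Ea Ee EQ hg D0p E2.
move: (normv (P + w) ^+ 2) (dotv (P + w) (w - U)) (normv (w - U) ^+ 2) (normv (U + P) ^+ 2).
move=> al be ep Q EPhi EQ' Ea Ee EQ hg D0p E2.
have X0 : 0 <= Q + lam ^+ 2 * ep by apply: addr_ge0 => //; apply: mulr_ge0 => //; apply: sqr_ge0.
have lne : lam != 0 by rewrite gt_eqF.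
have PhiD : tau / 2 * (Q + lam ^+ 2 * ep) <= Phi.
  case: (lerP lam 1) => hl.
  - have H : Phi - lam / 2 * (Q + lam ^+ 2 * ep) = lam / 2 * (al + (1 - lam ^+ 2) * ep)
      by rewrite EPhi EQ'; field.
    have H0 : 0 <= lam / 2 * (al + (1 - lam ^+ 2) * ep).
      apply: mulr_ge0; first by apply: divr_ge0; lra.
      apply: addr_ge0 => //; apply: mulr_ge0 => //; nra.
    have H1 : tau / 2 * (Q + lam ^+ 2 * ep) <= lam / 2 * (Q + lam ^+ 2 * ep).
      by apply: ler_wpM2r => //; lra.
    lra.
  - have H : Phi - lam^-1 / 2 * (Q + lam ^+ 2 * ep) = ((lam ^+ 2 - 1) * Q + lam ^+ 2 * al) / (2 * lam)
      by rewrite EPhi EQ'; field.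
    have H0 : 0 <= ((lam ^+ 2 - 1) * Q + lam ^+ 2 * al) / (2 * lam).
      apply: divr_ge0; last lra.
      apply: addr_ge0; apply: mulr_ge0 => //; [nra | apply: sqr_ge0].
    have H1 : tau / 2 * (Q + lam ^+ 2 * ep) <= lam^-1 / 2 * (Q + lam ^+ 2 * ep).
      by apply: ler_wpM2r => //; lra.
    lra.
have g0 : tau / 2 <= gam.
  rewrite -(ler_pM2r D0p) hg; lra.
have h1 : 1 - rb ^+ 2 <= rho * (2 - rho) by nra.
have h2 : tau ^+ 2 / 4 <= gam ^+ 2.
  have -> : tau ^+ 2 / 4 = (tau / 2) ^+ 2 by field.
  have t2 : 0 < tau / 2 by lra.
  nra.
have h3 : (1 - rb ^+ 2) * (tau ^+ 2 / 4) <= rho * (2 - rho) * gam ^+ 2.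
  apply: ler_pM => //; [nra | apply: divr_ge0; [apply: sqr_ge0 | lra]].
have h4 : (1 - rb ^+ 2) * (tau ^+ 2 / 4) * (Q + lam ^+ 2 * ep)
          <= rho * (2 - rho) * gam ^+ 2 * (Q + lam ^+ 2 * ep).
  exact: ler_wpM2r.
have h5 : 0 <= 2 * rho * gam * (S1 + S2).
  apply: mulr_ge0; last lra. apply: mulr_ge0; last lra. lra.
rewrite E2.
have -> : 2 * rho * gam * (Phi + S1 + S2) = 2 * rho * gam * (S1 + S2) + 2 * rho * gam * Phi by ring.
rewrite -hg.
have e4 : rho * (2 - rho) * gam ^+ 2 * (Q + lam ^+ 2 * ep)
  = 2 * rho * gam * (gam * (Q + lam ^+ 2 * ep)) - (rho * gam) ^+ 2 * (Q + lam ^+ 2 * ep) by ring.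
rewrite e4 in h4.
lra.
Qed.

Lemma vstep {m n} (g : 'cV[R]_m -> \bar R) (C : 'M[R]_(n,m)) (d c : 'cV[R]_n) lam
    (vk : 'cV[R]_m) :
  proper_fun g -> convex_fun g ->
  (forall v', (g vk + (dotv c (C *m vk - d))%:E + (lam / 2 * normv (C *m vk - d) ^+ 2)%:E
     <= g v' + (dotv c (C *m v' - d))%:E + (lam / 2 * normv (C *m v' - d) ^+ 2)%:E)%E) ->
  subdiff g vk (- (C^T *m (c + lam *: (C *m vk - d)))).
Proof.
move=> gp gc hmin.
apply: (@min_subdiff _ _ (fun v => dotv c (C *m v - d) + lam / 2 * normv (C *m v - d) ^+ 2)) => //.
- by move=> v'; rewrite !EFinD !addeA; exact: hmin.
- move=> v'; eexists => t _; rewrite (quad_q C c (- d) lam vk v' t); exact: lexx.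
Qed.

Lemma ustep {m n} (f : 'cV[R]_m -> \bar R) (M : 'M[R]_(n,m)) (c : 'cV[R]_n) lam
    (uk : 'cV[R]_m) :
  proper_fun f -> convex_fun f ->
  (forall u', (f uk + (dotv c (M *m uk))%:E + (lam / 2 * normv (M *m uk) ^+ 2)%:E
     <= f u' + (dotv c (M *m u'))%:E + (lam / 2 * normv (M *m u') ^+ 2)%:E)%E) ->
  subdiff f uk (- (M^T *m (c + lam *: (M *m uk)))).
Proof.
move=> gp gc hmin.
apply: (@min_subdiff _ _ (fun v => dotv c (M *m v) + lam / 2 * normv (M *m v) ^+ 2)) => //.
- by move=> v'; rewrite !EFinD !addeA; exact: hmin.
- move=> v'; eexists => t _; have := quad_q M c 0 lam uk v' t; rewrite /= !addr0 => ->.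
  exact: lexx.
Qed.

Lemma Se_ne {m1 m2 n} (f : 'cV[R]_m1 -> \bar R) (g : 'cV[R]_m2 -> \bar R)
    (M : 'M[R]_(n, m1)) (C : 'M[R]_(n, m2)) (d : 'cV[R]_n) :
  proper_fun f -> proper_fun g ->
  (exists us vs zs, saddle_point f g M C d us vs zs) -> exists zw, Se f g M C d zw.
Proof.
move=> [fni _] [gni _] [us [vs [zs [hfin [hmin hmax]]]]].
move: hfin; rewrite /lagr !fin_numD => /andP[/andP[ff gf] _].
have [a Fa] := finE ff; have [b Gb] := finE gf.
have r0 : M *m us + C *m vs - d = 0.
  apply: dotv_eq0; apply/le_anti/andP; split; last exact: dotv_ge0.
  have := hmax (zs + (M *m us + C *m vs - d)); rewrite /lagr Fa Gb -!EFinD lee_fin.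
  move: (M *m us + C *m vs - d) => r; dexp; lra.
have sf : subdiff f us (- (M^T *m zs)).
  split; first by rewrite Fa.
  move=> u'; have := hmin u' vs; rewrite /lagr Fa Gb.
  case Fu: (f u') => [c||].
  - rewrite -!EFinD !lee_fin; dexp; rewrite !(dotvC (M^T *m zs)) -!dotv_mulmx; lra.
  - by move=> _; rewrite leey.
  - by have := fni u'; rewrite Fu.
have sg : subdiff g vs (- (C^T *m zs)).
  split; first by rewrite Gb.
  move=> v'; have := hmin us v'; rewrite /lagr Fa Gb.
  case Gv: (g v') => [c||].
  - rewrite -!EFinD !lee_fin; dexp; rewrite !(dotvC (C^T *m zs)) -!dotv_mulmx; lra.
  - by move=> _; rewrite leey.
  - by have := gni v'; rewrite Gv.
exists (zs, M *m us); split => /=.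
- exact: chain1.
- have -> : M *m us = d - C *m vs.
    apply/matrixP => i j; move/matrixP: r0 => /(_ i j); rewrite !mxE; lra.
  exact: chain2.
Qed.

Lemma argmin_nat (D : nat -> R) k : (1 <= k)%N ->
  exists i, (1 <= i <= k)%N /\ forall j, (1 <= j <= k)%N -> D i <= D j.
Proof.
elim: k => [//|k IH] _.
case: (posnP k) => [->|kp].
  by exists 1%N; split => // j hj; have -> : j = 1%N by lia.
have [i [hi hmin]] := IH kp.
case: (ltrP (D k.+1) (D i)) => h.
- exists k.+1; split; first by lia.
  move=> j hj; case: (ltnP j k.+1) => hjk.
  + apply: ltW; apply: lt_le_trans h _; apply: hmin; lia.
  + by have -> : j = k.+1 by lia.
- exists i; split; first by lia.
  move=> j hj; case: (ltnP j k.+1) => hjk.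
  + apply: hmin; lia.
  + by have -> : j = k.+1 by lia.
Qed.

Lemma tele (E D : nat -> R) K :
  (forall j, (1 <= j)%N -> E j + K * D j <= E j.-1) ->
  forall k, K * \sum_(j < k) D j.+1 <= E 0%N - E k.
Proof.
move=> H; elim => [|k IH]; first by rewrite big_ord0 mulr0 subrr.
rewrite big_ord_recr /= mulrDr; have := H k.+1 isT; rewrite /=; lra.
Qed.

Lemma final_bound (N Di kk rb tau d0 : R) : 0 <= N -> N ^+ 2 <= Di -> 0 < kk ->
  0 <= rb < 1 -> 0 < tau ->
  Num.sqrt ((1 - rb ^+ 2) * (tau ^+ 2 / 4) * kk * Di) <= d0 ->
  N <= 2 * d0 / ((1 - rb) * tau * Num.sqrt kk).
Proof.
move=> N0 ND k0 /andP[rb0 rb1] t0 hQ.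
have s0 : 0 < Num.sqrt kk by rewrite sqrtr_gt0.
have s2 : Num.sqrt kk ^+ 2 = kk by rewrite sqr_sqrtr // ltW.
have Di0 : 0 <= Di by apply: le_trans ND; apply: sqr_ge0.
have A0 : 0 <= (1 - rb ^+ 2) * (tau ^+ 2 / 4) * kk * Di.
  apply: mulr_ge0 => //; apply: mulr_ge0; [apply: mulr_ge0; [nra|] | lra].
  by apply: divr_ge0; [apply: sqr_ge0 | lra].
move: hQ; set Q := Num.sqrt _ => hQ.
have Q0 : 0 <= Q by apply: sqrtr_ge0.
have Q2 : Q ^+ 2 = (1 - rb ^+ 2) * (tau ^+ 2 / 4) * kk * Di by rewrite sqr_sqrtr.
have pos : 0 < (1 - rb) * tau * Num.sqrt kk by apply: mulr_gt0 => //; apply: mulr_gt0 => //; lra.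
rewrite ler_pdivlMr //.
have h1 : (N * ((1 - rb) * tau * Num.sqrt kk)) ^+ 2 <= (2 * Q) ^+ 2.
  have -> : (N * ((1 - rb) * tau * Num.sqrt kk)) ^+ 2
          = N ^+ 2 * ((1 - rb) ^+ 2 * (tau ^+ 2 * Num.sqrt kk ^+ 2)) by ring.
  rewrite s2.
  have -> : (2 * Q) ^+ 2 = Di * ((1 - rb ^+ 2) * (tau ^+ 2 * kk)) by rewrite exprMn Q2; field.
  apply: ler_pM => //; first by apply: sqr_ge0.
    apply: mulr_ge0; first by apply: sqr_ge0.
    by apply: mulr_ge0; [apply: sqr_ge0 | lra].
  apply: ler_wpM2r; first by apply: mulr_ge0; [apply: sqr_ge0 | lra].
  nra.
have L0 : 0 <= N * ((1 - rb) * tau * Num.sqrt kk) by apply: mulr_ge0 => //; apply: ltW.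
have : N * ((1 - rb) * tau * Num.sqrt kk) <= 2 * Q by nra.
lra.
Qed.
End Aux.

Lemma sum_min (R : realType) (D : nat -> R) (k i : nat) :
  (forall j, (1 <= j <= k)%N -> D i <= D j) -> k%:R * D i <= \sum_(j < k) D j.+1.
Proof.
move=> h.
have : \sum_(j < k) D i <= \sum_(j < k) D j.+1.
  by apply: ler_sum => j _; apply: h; rewrite /= ltn_ord.
by rewrite sumr_const card_ord mulr_natl.
Qed.
Lemma K_ge0 (R : realType) (rb tau : R) : 0 <= rb < 1 -> 0 <= (1 - rb ^+ 2) * (tau ^+ 2 / 4).
Proof.
move=> /andP[h1 h2]; apply: mulr_ge0; first nra.
by apply: divr_ge0; [apply: sqr_ge0 | lra].
Qed.


Theorem mainTheorem5 (R : realType) (m1 m2 n : nat)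
  (f : 'cV[R]_m1 -> \bar R) (g : 'cV[R]_m2 -> \bar R)
  (M : 'M[R]_(n, m1)) (C : 'M[R]_(n, m2)) (d : 'cV[R]_n)
  (hf : proper_fun f /\ closed_fun f /\ convex_fun f)
  (hg : proper_fun g /\ closed_fun g /\ convex_fun g)
  (A1 : exists us vs zs, saddle_point f g M C d us vs zs)
  (A2 : exists y, rel_int (dom_fun (conj_fun f)) y /\ range_mx M^T y)
  (A3 : exists y, rel_int (dom_fun (conj_fun g)) y /\ range_mx C^T y)
  (lam rhobar : R) (hlam : 0 < lam) (hrho : 0 <= rhobar < 1)
  (u : nat -> 'cV[R]_m1) (v : nat -> 'cV[R]_m2) (z w : nat -> 'cV[R]_n)
  (gam rho : nat -> R)
  (hrun : PMM_run f g M C d lam rhobar u v z w gam rho) :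
  let x k := z k.-1 + lam *: w k.-1 + lam *: (C *m v k - d) in
  let y k := x k - lam *: (w k.-1 - M *m u k) in
  let d0 := dist_pair (z 0%N) (w 0%N) (Se f g M C d) in
  let tau := Num.min lam lam^-1 in
  forall k : nat, (1 <= k)%N ->
    (exists s, subdiff g (v k) s /\ 0 = s + C^T *m x k) /\
    (exists s, subdiff f (u k) s /\ 0 = s + M^T *m y k) /\
    (exists i : nat, (1 <= i <= k)%N /\
       normv (M *m u i + C *m v i - d)
         <= 2 * d0 / ((1 - rhobar) * tau * Num.sqrt k%:R) /\
       normv (x i - y i)
         <= 2 * d0 / ((1 - rhobar) * tau * Num.sqrt k%:R)).
Proof.
move=> x y d0 tau k hk.
case: hf => fp [_ fc]; case: hg => gp [_ gc].
have sv : forall j, (1 <= j)%N -> subdiff g (v j) (- (C^T *m x j)).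
  move=> j hj; have [hv _] := hrun j hj.
  by apply: vstep.
have su : forall j, (1 <= j)%N -> subdiff f (u j) (- (M^T *m y j)).
  move=> j hj; have [_ [hu _]] := hrun j hj.
  have -> : y j = z j.-1 + lam *: (C *m v j - d) + lam *: (M *m u j).
    by rewrite /y /x; apply/matrixP => a b; rewrite !mxE; ring.
  by apply: ustep.
split; first by exists (- (C^T *m x k)); split; [exact: sv | rewrite addNr].
split; first by exists (- (M^T *m y k)); split; [exact: su | rewrite addNr].
set K := (1 - rhobar ^+ 2) * (tau ^+ 2 / 4).
set D := fun j => normv (M *m u j + C *m v j - d) ^+ 2 + normv (x j - y j) ^+ 2.
have t0 : 0 < tau by rewrite /tau lt_min hlam invr_gt0 hlam.
have tl : tau <= lam by rewrite /tau ge_min lexx.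
have tl' : tau <= lam^-1 by rewrite /tau ge_min lexx orbT.
have fej : forall zw, Se f g M C d zw -> forall j, (1 <= j)%N ->
   normv (z j - zw.1) ^+ 2 + normv (w j - zw.2) ^+ 2 + K * D j
   <= normv (z j.-1 - zw.1) ^+ 2 + normv (w j.-1 - zw.2) ^+ 2.
  move=> [zs ws] [Hs1 Hs2] j hj /=.
  have [_ [_ [hnz [hgam [hr [hz hw]]]]]] := hrun j hj.
  have eUP : M *m u j + C *m v j - d = M *m u j + (C *m v j - d) by rewrite addrA.
  have eP : d - C *m v j = - (C *m v j - d) by rewrite opprB.
  have mo1 : 0 <= dotv (d - C *m v j - ws) (x j - zs).
    by apply: (@subdiff_mono R n (h2 g C d)); [apply: chain2; exact: sv | exact: Hs2].
  have mo2 : 0 <= dotv (- (M *m u j) - - ws) (y j - zs).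
    by apply: (@subdiff_mono R n (h1 f M)); [apply: chain1; exact: su | exact: Hs1].
  rewrite eP in mo1; rewrite eP in hgam; rewrite eUP in hnz hgam hz.
  have den0 : 0 < normv (M *m u j + (C *m v j - d)) ^+ 2
                  + lam ^+ 2 * normv (M *m u j - w j.-1) ^+ 2.
    have a0 := @normv_ge0 R _ (M *m u j + (C *m v j - d)).
    have b0 := @normv_ge0 R _ (M *m u j - w j.-1).
    case: (ltrP 0 (normv (M *m u j + (C *m v j - d)))) => ha.
      have : 0 < normv (M *m u j + (C *m v j - d)) ^+ 2 by rewrite exprn_gt0.
      have : 0 <= lam ^+ 2 * normv (M *m u j - w j.-1) ^+ 2
        by apply: mulr_ge0; apply: sqr_ge0.
      lra.
    have hb : 0 < normv (M *m u j - w j.-1).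
      rewrite lt_def b0 andbT; apply: contra hnz => /eqP ->.
      have -> : normv (M *m u j + (C *m v j - d)) = 0 by apply/le_anti; rewrite ha a0.
      by rewrite addr0.
    have : 0 < lam ^+ 2 * normv (M *m u j - w j.-1) ^+ 2
      by apply: mulr_gt0; apply: exprn_gt0.
    have : 0 <= normv (M *m u j + (C *m v j - d)) ^+ 2 by apply: sqr_ge0.
    lra.
  have hgm : gam j * (normv (M *m u j + (C *m v j - d)) ^+ 2
                  + lam ^+ 2 * normv (M *m u j - w j.-1) ^+ 2)
      = lam * normv (C *m v j - d + w j.-1) ^+ 2
        + lam * dotv (- (C *m v j - d) - M *m u j) (w j.-1 - M *m u j).
    by rewrite hgam divfK // gt_eqF.
  rewrite /D eUP hz hw.
  by apply: (@fejer R n (z j.-1) (w j.-1) (C *m v j - d) (M *m u j) zs ws (x j) (y j)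
    lam (rho j) (gam j) rhobar tau).
have tsum : forall zw, Se f g M C d zw ->
    K * \sum_(j < k) D j.+1 <= normv (z 0%N - zw.1) ^+ 2 + normv (w 0%N - zw.2) ^+ 2.
  move=> zw hzw.
  have := @tele R (fun j => normv (z j - zw.1) ^+ 2 + normv (w j - zw.2) ^+ 2) D K
    (fej zw hzw) k.
  have := sqr_ge0 (normv (z k - zw.1)); have := sqr_ge0 (normv (w k - zw.2)).
  move=> a b c; apply: (le_trans c); rewrite lerBlDr lerDl; exact: addr_ge0.
have [i [hi hmin]] := @argmin_nat R D k hk.
have sumge := @sum_min R D k i hmin.
have K0 : 0 <= K by exact: K_ge0.
have dle : Num.sqrt (K * k%:R * D i) <= d0.
  rewrite /d0 /dist_pair; apply: lb_le_inf.
  - have [zw hzw] : exists zw, Se f g M C d zw by apply: Se_ne.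
    by exists (Num.sqrt (normv (z 0%N - zw.1) ^+ 2 + normv (w 0%N - zw.2) ^+ 2)); exists zw.
  - move=> _ [zw hzw <-]; rewrite ler_sqrt; last first.
      by apply: addr_ge0; apply: sqr_ge0.
    apply: le_trans (tsum zw hzw); rewrite -mulrA; exact: ler_wpM2l.
exists i; split => //.
have kk0 : 0 < (k%:R : R) by rewrite ltr0n.
have e1 := sqr_ge0 (normv (M *m u i + C *m v i - d)).
have e2 := sqr_ge0 (normv (x i - y i)).
split.
- apply: (@final_bound R (normv (M *m u i + C *m v i - d)) (D i) k%:R rhobar tau d0) => //.
  + exact: normv_ge0.
  + by rewrite /D lerDl.
- apply: (@final_bound R (normv (x i - y i)) (D i) k%:R rhobar tau d0) => //.
  + exact: normv_ge0.
  + by rewrite /D lerDr.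
Qed.
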